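(* Let $(\mathcal{P},d)$ be a tree metric given by the weighted tree $T$, let $G$ be any directed network on $\mathcal{P}$ (arc $(x,y)$ of length $d(x,y)$), and let $u\neq v$ be in $\mathcal{P}$. Then every node other than $u$ on any greedy path from $u$ to $v$ in $G$ lies in the connected component of $T-u$ that contains $v$.
   Context: A tree metric on a finite set $\mathcal{P}$ is given by a spanning tree $T$ on vertex set $\mathcal{P}$ with positive edge weights; $d(x,y)=d_T(x,y)$ is the total weight of the unique $x$–$y$ path in $T$. $T-u$ is the forest obtained by deleting $u$ (its components are the subtrees hanging below $u$ when $T$ is rooted at $u$). A greedy path from $u$ to $v$ in $G$ is a directed path $u=x_1,\dots,x_j=v$ of arcs of $G$ with $d(x_i,v)>d(x_{i+1},v)$ for all $i$. *)

(* Defs.v *)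
From mathcomp Require Import all_boot all_order all_algebra.
Set Implicit Arguments. Unset Strict Implicit. Unset Printing Implicit Defensive.
Import Order.TTheory GRing.Theory Num.Theory.
Local Open Scope ring_scope.

Definition simple_path (P : finType) (e : rel P) (x : P) (p : seq P) : bool :=
  path e x p && uniq (x :: p).

Definition is_tree (P : finType) (e : rel P) : Prop :=
  [/\ symmetric e, irreflexive e,
      (forall x y : P, connect e x y) &
      (forall (x : P) (p q : seq P),
          simple_path e x p -> simple_path e x q -> last x p = last x q -> p = q)].

Definition pos_weights (R : realFieldType) (P : finType) (e : rel P)
    (w : P -> P -> R) : Prop :=
  (forall x y, w x y = w y x) /\ (forall x y, e x y -> 0 < w x y).

Definition walk_weight (R : realFieldType) (P : finType) (w : P -> P -> R)
    (x : P) (p : seq P) : R :=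
  \sum_(c <- pairmap w x p) c.

Definition is_tree_metric (R : realFieldType) (P : finType) (e : rel P)
    (w : P -> P -> R) (d : P -> P -> R) : Prop :=
  forall (x : P) (p : seq P), simple_path e x p -> d x (last x p) = walk_weight w x p.

Definition greedy_path (R : realFieldType) (P : finType) (G : rel P)
    (d : P -> P -> R) (u v : P) (p : seq P) : bool :=
  path (fun a b => G a b && (d b v < d a v)) u p && (last u p == v).

Definition in_comp_minus (P : finType) (e : rel P) (u v x : P) : bool :=
  (x != u) && connect [rel a b | [&& e a b, a != u & b != u]] v x.

(* Main.v *)
Require Import Defs.
From mathcomp Require Import all_boot all_order all_algebra.
Set Implicit Arguments. Unset Strict Implicit. Unset Printing Implicit Defensive.
Import Order.TTheory GRing.Theory Num.Theory.
Local Open Scope ring_scope.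

Lemma greedy_dec (R : realFieldType) (P : finType) (r : rel P) (f : P -> R) a s :
  path (fun a b => r a b && (f b < f a)) a s -> forall x, x \in s -> f x < f a.
Proof.
elim: s a => [|b s IH] a //= /andP[/andP[_ hab] hp] x.
rewrite inE => /orP[/eqP->//|xs].
exact: lt_trans (IH _ hp _ xs) hab.
Qed.

Lemma ww_ge0 (R : realFieldType) (P : finType) (e : rel P) (w : P -> P -> R) a s :
  pos_weights e w -> path e a s -> 0 <= walk_weight w a s.
Proof.
move=> [_ hw]; elim: s a => [|b s IH] a /=; first by rewrite /walk_weight big_nil.
move=> /andP[hab hp]; rewrite /walk_weight /= big_cons.
by apply: addr_ge0; [exact: ltW (hw _ _ hab) | exact: IH].
Qed.

Theorem lemma3p1 (R : realFieldType) (P : finType) (e : rel P)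
    (w : P -> P -> R) (d : P -> P -> R) (G : rel P) (u v : P)
    (p : seq P) :
  is_tree e -> pos_weights e w -> is_tree_metric e w d ->
  u != v -> greedy_path G d u v p ->
  forall x, x \in p -> x != u -> in_comp_minus e u v x.
Proof.
move=> [esym eirr econn _] hw hd uv /andP[hp _] x xp xu.
have hlt := greedy_dec (f := fun y => d y v) hp xp.
rewrite /in_comp_minus xu /=.
set e' := [rel a b | [&& e a b, a != u & b != u]].
have e'sym : symmetric e'.
  by move=> a b; rewrite /e' /= esym; case: (e b a) (a != u) (b != u) => [] [] [].
rewrite (sym_connect_sym e'sym).
case/connectP: (econn x v) => q0 hq0 ev.
rewrite ev; move: ev; case/shortenP: hq0 => q hq uq _ ev.
case hu: (u \in x :: q); last first.
  apply/connectP; exists q => //.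
  apply: (@sub_in_path _ (predC1 u)) hq; last first.
    apply/allP => y yq /=; apply/negP => /eqP yu; by rewrite -yu yq in hu.
  by move=> a b au bu hab; rewrite /e' /= hab; move: au bu; rewrite !inE /= => -> ->.
exfalso.
move: hu; rewrite inE eq_sym (negbTE xu) /= => uq'.
case/splitPr: uq' ev hq uq => q1 q2 ev hq uq.
have e1 : x :: q1 ++ u :: q2 = (x :: rcons q1 u) ++ q2 by rewrite /= cat_rcons.
have sp1 : simple_path e x (rcons q1 u).
  move: hq uq; rewrite /simple_path -cat_rcons cat_path -cat_cons cat_uniq.
  by move=> /andP[-> _] /and3P[-> _ _].
have sp2 : simple_path e u q2.
  move: hq uq; rewrite /simple_path cat_path -cat_cons cat_uniq.
  by case/andP=> _ /= /andP[_ ->] /and3P[_ _ ->].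
have H1 := hd _ _ sp1; have H2 := hd _ _ sp2.
have H3 : d x (last x (q1 ++ u :: q2)) = walk_weight w x (q1 ++ u :: q2).
  by apply: hd; rewrite /simple_path hq uq.
rewrite last_rcons in H1; rewrite last_cat /= in H3.
have E : walk_weight w x (q1 ++ u :: q2) = walk_weight w x (rcons q1 u) + walk_weight w u q2.
  by rewrite /walk_weight -cat_rcons pairmap_cat big_cat last_rcons.
have H0 : 0 <= d x u by rewrite H1; apply: (ww_ge0 hw); case/andP: sp1.
Show.
move: hlt; rewrite ev last_cat /= H3 E -H1 -H2.
by rewrite gtrDr ltNge H0.
Qed.
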